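(* Let $d,k,S\ge1$ be integers and $N\ge (S+1)^d k$. Let $f(\mathbf{x}_1,\dots,\mathbf{x}_N)$, $\mathbf{x}_i\in\mathbb{R}^d$, be a real polynomial in the $dN$ coordinates such that for each $j\in\{1,\dots,N\}$ the degree of $f$ in $\mathbf{x}_j$ is at most $S$, and such that $f=0$ on $\triangle_k$. Then $f\equiv0$.
   Context: The degree of $f$ in $\mathbf{x}_j$ means the total degree of $f$ as a polynomial in the $d$ coordinates of $\mathbf{x}_j$ (coefficients being polynomials in the other variables). $\triangle_k=\{(\mathbf{x}_1,\dots,\mathbf{x}_N)\in(\mathbb{R}^d)^N:\mathbf{x}_{j_1}=\dots=\mathbf{x}_{j_k}\text{ for some distinct indices }j_1,\dots,j_k\}$ (for $k=1$ this is all of $(\mathbb{R}^d)^N$). *)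

(* Defs.v *)
From HB Require Import structures.
From mathcomp Require Import all_boot all_order all_algebra.
Set Implicit Arguments. Unset Strict Implicit. Unset Printing Implicit Defensive.
Import Order.TTheory GRing.Theory Num.Theory.
Local Open Scope ring_scope.

(* A polynomial in the d*N coordinates x_{j,i} (j < N, i < d) all of whose
   individual exponents are at most S is encoded by its coefficient function
   on exponent arrays  e : 'I_N -> 'I_d -> 'I_S.+1. *)
Definition expo (N d S : nat) := {ffun 'I_N -> {ffun 'I_d -> 'I_S.+1}}.

Definition monom (R : ringType) (N d S : nat) (e : expo N d S)
  (x : 'I_N -> 'rV[R]_d) : R :=
  \prod_(j < N) \prod_(i < d) (x j 0 i) ^+ (e j i).

Definition peval (R : ringType) (N d S : nat) (c : expo N d S -> R)
  (x : 'I_N -> 'rV[R]_d) : R :=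
  \sum_(e : expo N d S) c e * monom e x.

Definition block_deg_le (R : ringType) (N d S : nat) (c : expo N d S -> R) : Prop :=
  forall e : expo N d S, c e != 0 ->
    forall j : 'I_N, (\sum_(i < d) (e j i : nat) <= S)%N.

Definition fat_diag (R : ringType) (N d k : nat) (x : 'I_N -> 'rV[R]_d) : Prop :=
  exists J : {set 'I_N}, #|J| = k /\ forall a b, a \in J -> b \in J -> x a = x b.

(* Main.v *)
Require Import Defs.
From mathcomp Require Import all_boot all_order all_algebra.
Local Open Scope ring_scope.
Import Order.TTheory GRing.Theory Num.Theory.

Lemma dual_basis (R : realFieldType) (S : nat) :
  exists W : 'M[R]_(S.+1), forall a b : 'I_S.+1,
    \sum_(p < S.+1) W p a * ((p : nat)%:R) ^+ b = (a == b)%:R.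
Proof.
pose v : 'rV[R]_(S.+1) := \row_(p < S.+1) ((p : nat)%:R).
pose V := Vandermonde S.+1 v.
have hV : V \in unitmx.
  rewrite unitmxE det_Vandermonde unitfE; apply/prodf_neq0 => i _.
  apply/prodf_neq0 => j hij; rewrite !mxE -natrB ?pnatr_eq0 -?lt0n ?subn_gt0 //.
  exact: ltnW.
exists (invmx V) => a b.
have := congr1 (fun M : 'M[R]_(S.+1) => M b a) (mulmxV hV).
rewrite !mxE eq_sym => <-; apply: eq_bigr => p _; rewrite !mxE mulrC.
by [].
Qed.

Lemma subset_card (T : finType) (A : {set T}) n :
  (n <= #|A|)%N -> exists B : {set T}, B \subset A /\ #|B| = n.
Proof.
move=> h; move: {2}#|A| (erefl #|A|) h => m; elim: m A => [|m IH] A hA h.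
  by exists A; split => //; apply/eqP; rewrite eqn_leq h hA.
case: (ltnP n #|A|) => hn; last first.
  by exists A; split => //; apply/eqP; rewrite eqn_leq hn.
have : (0 < #|A|)%N by rewrite hA.
case/card_gt0P => x xA.
have hc : #|A :\ x| = m by have := cardsD1 x A; rewrite xA hA add1n => -[].
have hn' : (n <= #|A :\ x|)%N by rewrite hc -ltnS -hA.
have [B [sB cB]] := IH (A :\ x) hc hn'.
exists B; split => //; apply: subset_trans sB _; exact: subsetDl.
Qed.

Theorem mainTheorem7 (R : realFieldType) (d k S N : nat)
  (hd : (1 <= d)%N) (hk : (1 <= k)%N) (hS : (1 <= S)%N)
  (hN : ((S.+1) ^ d * k <= N)%N)
  (c : expo N d S -> R)
  (hdeg : block_deg_le c)
  (hvan : forall x : 'I_N -> 'rV[R]_d, fat_diag k x -> peval c x = 0) :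
  forall e : expo N d S, c e = 0.
Proof.
have [W hW] := dual_basis R S.
pose X (g : expo N d S) : 'I_N -> 'rV[R]_d := fun j => \row_i (((g j i : 'I_S.+1) : nat)%:R).
have hX : forall g, peval c (X g) = 0.
  move=> g; apply: hvan.
  pose pre (v : {ffun 'I_d -> 'I_S.+1}) := [set j | g j == v].
  have [v hv] : exists v, (k <= #|pre v|)%N.
    apply/existsP; apply: contraT; rewrite negb_exists => /forallP hall.
    have : (N <= (S.+1) ^ d * k.-1)%N.
      have -> : N = \sum_(v : {ffun 'I_d -> 'I_S.+1}) #|pre v|.
        rewrite -[in LHS](card_ord N) -sum1_card (partition_big g xpredT) //=.
        by apply: eq_bigr => v _; rewrite sum1_card cardsE.
      have hcard : #|{ffun 'I_d -> 'I_S.+1}| = (S.+1 ^ d)%N by rewrite card_ffun !card_ord.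
      rewrite -hcard -sum_nat_const.
      apply: leq_sum => v _; have := hall v; rewrite -ltnNge.
      by case: k hk {hN hall} => //= k' _; rewrite ltnS.
    move/(leq_trans hN); case: k hk {hall hN} => // k' _ /=.
    by rewrite leq_pmul2l ?expn_gt0 // ltnn.
  have [J [sJ cJ]] := @subset_card _ (pre v) k hv.
  exists J; split => // a b aJ bJ.
  move/subsetP: sJ => sJ; move: (sJ _ aJ) (sJ _ bJ); rewrite !inE => /eqP ha /eqP hb.
  by rewrite /X ha hb.
move=> a.
pose T := \sum_(g : expo N d S)
   (\prod_(j < N) \prod_(i < d) W (g j i) (a j i)) * peval c (X g).
have T0 : T = 0 by apply: big1 => g _; rewrite hX mulr0.
rewrite -T0 /T /peval.
under eq_bigr => g _ do rewrite mulr_sumr.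
rewrite exchange_big /=.
transitivity (\sum_(e : expo N d S) c e * (a == e)%:R).
  by rewrite (bigD1 a) //= eqxx mulr1 big1 ?addr0 // => e /negbTE; rewrite eq_sym => ->; rewrite mulr0.
apply: eq_bigr => e _.
symmetry.
transitivity (c e * \sum_(g : expo N d S) \prod_(j < N) \prod_(i < d)
    (W (g j i) (a j i) * ((g j i : nat)%:R) ^+ (e j i))).
  rewrite mulr_sumr; apply: eq_bigr => g _.
  rewrite mulrCA; congr (_ * _); rewrite /monom -big_split /=.
  by apply: eq_bigr => j _; rewrite -big_split /=; apply: eq_bigr => i _; rewrite mxE.
congr (_ * _).
rewrite -(bigA_distr_bigA (fun j (h : {ffun 'I_d -> 'I_S.+1}) =>
   \prod_(i < d) (W (h i) (a j i) * ((h i : nat)%:R) ^+ (e j i)))) /=.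
under eq_bigr => j _ do rewrite -(bigA_distr_bigA (fun i (p : 'I_S.+1) =>
   W p (a j i) * ((p : nat)%:R) ^+ (e j i))) /=.
under eq_bigr => j _ do under eq_bigr => i _ do rewrite hW.
have [<-|ne] := eqVneq a e.
  by rewrite big1 // => j _; rewrite big1 // => i _; rewrite eqxx.
have : [exists j, [exists i, a j i != e j i]].
  apply: contraR ne => /existsPn h; apply/eqP/ffunP => j.
  by apply/ffunP => i; have := h j; move/existsPn/(_ i)/negPn/eqP.
case/existsP=> j /existsP [i hji]; rewrite (bigD1 j) //= (bigD1 i) //= (negbTE hji).
by rewrite !mul0r.
Qed.
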